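(* The following identities hold: (i) $M(1;2;1;x)\cdot M(1;2;1;-x)=1$ as formal power series in $x$; (ii) $M(0;2;1;x)=-M(0;2;1;-x)$ as formal power series in $x$; (iii) for complex $|x|<1$ the series $M(0;2;1;x)$ converges and equals $\operatorname{arsinh}(x)$ (principal branch, $\operatorname{arsinh}(0)=0$).
   Context: For $m,a,b\in\mathbb{C}$ the master series is the power series $M(m;a;b;x)=m+x+\sum_{\ell\ge 2}\frac{x^\ell}{\ell!}\prod_{\gamma=1}^{\ell-1}(m-a\gamma+b\ell)$. *)

(* Defs.v *)
From Stdlib Require Import Reals Factorial.
From Coquelicot Require Import Coquelicot.
Open Scope C_scope.

Fixpoint prodC (f : nat -> C) (n : nat) : C :=
  match n with
  | O => 1
  | S k => prodC f k * f (S k)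
  end.

Fixpoint powC (z : C) (n : nat) : C :=
  match n with
  | O => 1
  | S k => z * powC z k
  end.

(* Coefficient of x^l in the master series M(m;a;b;x):
   l = 0 : m ;  l >= 1 : (1/l!) prod_{g=1}^{l-1} (m - a g + b l)
   (for l = 1 the empty product gives 1, matching the term x). *)
Definition master_coef (m a b : C) (l : nat) : C :=
  match l with
  | O => m
  | S _ => prodC (fun g => m - a * RtoC (INR g) + b * RtoC (INR l)) (l - 1)
           / RtoC (INR (Factorial.fact l))
  end.

(* principal argument, in (-PI, PI], with Arg 0 = 0 *)
Definition Arg (w : C) : R :=
  let u := fst w in let v := snd w in
  if Rlt_dec 0 u then atan (v / u)
  else if Rlt_dec u 0 then
         (if Rle_dec 0 v then (atan (v / u) + PI)%R else (atan (v / u) - PI)%R)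
  else if Rlt_dec 0 v then (PI / 2)%R
  else if Rlt_dec v 0 then (- (PI / 2))%R
  else 0%R.

Definition Clog (w : C) : C := (ln (Cmod w), Arg w).

(* principal square root: Re >= 0, and Im >= 0 when Re = 0 *)
Definition Csqrt (w : C) : C :=
  let u := fst w in let v := snd w in
  (sqrt ((Cmod w + u) / 2),
   if Rlt_dec v 0 then (- sqrt ((Cmod w - u) / 2))%R
   else sqrt ((Cmod w - u) / 2)).

Definition Carsinh (z : C) : C := Clog (z + Csqrt (z * z + 1)).

(* Main.v *)
Require Import Defs.
From Stdlib Require Import Reals Lra Lia Factorial.
From Coquelicot Require Import Coquelicot.
Open Scope C_scope.


Open Scope C_scope.

Ltac Ceq := apply injective_projections; simpl; try field; try ring.

Fixpoint prodR (f : nat -> R) (n : nat) : R :=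
  match n with O => 1%R | S k => (prodR f k * f (S k))%R end.

Definition mcR (m a b : R) (l : nat) : R :=
  match l with
  | O => m
  | S _ => (prodR (fun g => m - a * INR g + b * INR l) (l - 1) / INR (fact l))%R
  end.

Lemma prodC_ext f g n : (forall k, f k = g k) -> prodC f n = prodC g n.
Proof. intros H; induction n; simpl; [reflexivity| rewrite IHn, H; reflexivity]. Qed.

Lemma prodC_R (f : nat -> R) n : prodC (fun g => RtoC (f g)) n = RtoC (prodR f n).
Proof. induction n; simpl; [reflexivity|]. rewrite IHn. Ceq. Qed.

Lemma mc_R m a b l : master_coef (RtoC m) (RtoC a) (RtoC b) l = RtoC (mcR m a b l).
Proof.
  destruct l as [|l]; [reflexivity|]. unfold master_coef, mcR.
  rewrite (prodC_ext _ (fun g => RtoC (m - a * INR g + b * INR (S l)))).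
  2:{ intros k. Ceq. }
  rewrite prodC_R. rewrite RtoC_div; [reflexivity|]. apply INR_fact_neq_0.
Qed.

Lemma prodR_ext f g n : (forall k, f k = g k) -> prodR f n = prodR g n.
Proof. intros H; induction n; simpl; [reflexivity| rewrite IHn, H; reflexivity]. Qed.

Lemma prodR_shift f n : prodR f (S n) = (f 1%nat * prodR (fun g => f (S g)) n)%R.
Proof. induction n. simpl; ring. change (prodR f (S (S n))) with (prodR f (S n) * f (S (S n)))%R.
  rewrite IHn. simpl. ring. Qed.

Open Scope R_scope.

Lemma mcR_rec m k :
  INR (S (S (S k))) * INR (S (S k)) * mcR m 2 1 (S (S (S k)))
  = (m + INR (S k)) * (m - INR (S k)) * mcR m 2 1 (S k).
Proof.
  unfold mcR. replace (S (S (S k)) - 1)%nat with (S (S k)) by lia.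
  replace (S k - 1)%nat with k by lia.
  rewrite prodR_shift.
  rewrite (prodR_ext (fun g => m - 2 * INR (S g) + 1 * INR (S (S (S k))))
            (fun g => m - 2 * INR g + 1 * INR (S k))).
  2:{ intros g. rewrite !S_INR. ring. }
  change (prodR (fun g : nat => m - 2 * INR g + 1 * INR (S k)) (S k)) with
    (prodR (fun g : nat => m - 2 * INR g + 1 * INR (S k)) k * (m - 2 * INR (S k) + 1 * INR (S k))).
  rewrite !fact_simpl. rewrite !mult_INR.
  assert (H1 := INR_fact_neq_0 k).
  assert (H2 : INR (S k) <> 0) by (apply not_0_INR; lia).
  assert (H3 : INR (S (S k)) <> 0) by (apply not_0_INR; lia).
  assert (H4 : INR (S (S (S k))) <> 0) by (apply not_0_INR; lia).
  rewrite !S_INR in *. simpl INR. field. repeat split; auto.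
Qed.

Definition cc := mcR 0 2 1.
Definition bb := mcR 1 2 1.

Lemma cc0 : cc 0 = 0. Proof. reflexivity. Qed.
Lemma cc1 : cc 1 = 1. Proof. unfold cc, mcR. simpl. field. Qed.
Lemma cc2 : cc 2 = 0. Proof. unfold cc, mcR. simpl. field. Qed.
Lemma bb0 : bb 0 = 1. Proof. reflexivity. Qed.
Lemma bb1 : bb 1 = 1. Proof. unfold bb, mcR. simpl. field. Qed.
Lemma bb2 : bb 2 = 1/2. Proof. unfold bb, mcR. simpl. field. Qed.

Lemma cc_rec n : INR (S (S n)) * INR (S n) * cc (S (S n)) = - (INR n)^2 * cc n.
Proof.
  destruct n. rewrite cc2, cc0. ring.
  unfold cc. rewrite mcR_rec. ring.
Qed.

Lemma bb_rec n : INR (S (S n)) * bb (S (S n)) = (1 - INR n) * bb n.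
Proof.
  destruct n. rewrite bb2, bb0. simpl. field.
  assert (H := mcR_rec 1 n). fold bb in H.
  assert (H2 : INR (S (S n)) <> 0) by (apply not_0_INR; lia).
  apply (Rmult_eq_reg_r (INR (S (S n)))); [|auto].
  rewrite S_INR in H |- *. rewrite S_INR in H. rewrite (S_INR (S n)) in H2 |- *. rewrite S_INR in H2 |- *.
  rewrite S_INR in H. nra.
Qed.


Open Scope R_scope.

Lemma cc_odd n : cc n = - ((-1)^n * cc n).
Proof.
  cut (cc n = - ((-1)^n * cc n) /\ cc (S n) = - ((-1)^(S n) * cc (S n))); [tauto|].
  induction n.
  - rewrite cc0, cc1. simpl. split; ring.
  - destruct IHn as [H1 H2]. split; [exact H2|].
    assert (Hr := cc_rec n).
    assert (Ha : INR (S (S n)) * INR (S n) <> 0).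
    { apply Rmult_integral_contrapositive; split; apply not_0_INR; lia. }
    apply (Rmult_eq_reg_l (INR (S (S n)) * INR (S n))); [|exact Ha].
    replace ((-1) ^ S (S n)) with ((-1)^n) by (simpl; ring).
    transitivity (- (-1) ^ n * (INR (S (S n)) * INR (S n) * cc (S (S n)))); [|ring].
    rewrite Hr. rewrite H1 at 1. ring.
Qed.

Lemma powC_m1 n : powC (-1) n = RtoC ((-1)^n).
Proof. induction n; simpl; [reflexivity|]. rewrite IHn. Ceq. Qed.

Open Scope C_scope.
Lemma part2 : forall n : nat,
      master_coef 0 2 1 n = - (powC (-1) n * master_coef 0 2 1 n).
Proof.
  intros n. rewrite powC_m1, mc_R. fold (cc n).
  rewrite (cc_odd n) at 1. Ceq.
Qed.


Open Scope R_scope.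

Definition conv (u v : nat -> R) (n : nat) : R := sum_f_R0 (fun k => u k * v (n - k)%nat) n.

Lemma sum_rev f n : sum_f_R0 f n = sum_f_R0 (fun k => f (n - k)%nat) n.
Proof.
  revert f. induction n; intros f; [reflexivity|].
  rewrite decomp_sum by lia. simpl pred. rewrite (IHn (fun k => f (S k))).
  rewrite tech5. replace (S n - S n)%nat with 0%nat by lia.
  rewrite Rplus_comm. f_equal. apply sum_eq. intros i Hi. f_equal. lia.
Qed.

Lemma conv_comm u v n : conv u v n = conv v u n.
Proof.
  unfold conv. rewrite sum_rev. apply sum_eq. intros i Hi.
  replace (n - (n - i))%nat with i by lia. ring.
Qed.

Lemma conv_leib u v n : INR n * conv u v n =
  conv (fun k => INR k * u k) v n + conv u (fun k => INR k * v k) n.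
Proof.
  unfold conv. rewrite <- plus_sum. rewrite scal_sum. apply sum_eq.
  intros i Hi. rewrite minus_INR by lia. ring.
Qed.

Lemma conv_plus u w v n : conv (fun k => u k + w k) v n = conv u v n + conv w v n.
Proof. unfold conv. rewrite <- plus_sum. apply sum_eq. intros; ring. Qed.

Definition sh2 (u : nat -> R) (n : nat) : R := match n with S (S m) => u m | _ => 0 end.

Lemma conv_sh2 u v n : conv (sh2 u) v (S (S n)) = conv u v n.
Proof.
  unfold conv. rewrite (decomp_sum _ (S (S n))) by lia. simpl pred. rewrite (decomp_sum _ (S n)) by lia. simpl pred.
  simpl sh2. rewrite !Rmult_0_l, !Rplus_0_l. apply sum_eq. intros; reflexivity.
Qed.

Lemma sum_single f m : (forall k, (0 < k)%nat -> f k = 0) -> sum_f_R0 f m = f 0%nat.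
Proof. intros H; induction m; simpl; [reflexivity|]. rewrite IHm, (H (S m)) by lia. ring. Qed.

Definition d1 (n : nat) : R := if Nat.eqb n 1 then 1 else 0.

Lemma conv_d1 v m : conv d1 v (S m) = v m.
Proof.
  unfold conv. rewrite decomp_sum by lia. simpl pred.
  rewrite sum_single. unfold d1; simpl. replace (m - 0)%nat with m by lia. ring.
  intros k Hk. unfold d1. destruct k; [lia|]. simpl. ring.
Qed.

Lemma conv_d1_0 v : conv d1 v 0 = 0.
Proof. unfold conv, d1. simpl. ring. Qed.

Fixpoint rr (n : nat) : R :=
  match n with 0 => 1 | 1 => 0 | S (S m as p) => (1 - INR m) / INR (S p) * rr m end.

Lemma rr_rec m : INR (S (S m)) * rr (S (S m)) = (1 - INR m) * rr m.
Proof.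
  change (rr (S (S m))) with ((1 - INR m) / INR (S (S m)) * rr m). field. apply not_0_INR; lia.
Qed.

Definition DD (n : nat) : R := INR n * rr n.

Lemma DD_rel n : DD n + sh2 DD n = sh2 rr n.
Proof.
  unfold DD. destruct n as [|[|m]]; simpl sh2.
  - simpl. ring.
  - simpl. ring.
  - assert (H := rr_rec m). nra.
Qed.

Definition QQ := conv rr rr.

Lemma QQ_rec m : INR (S (S m)) * QQ (S (S m)) = (2 - INR m) * QQ m.
Proof.
  unfold QQ.
  assert (E : forall n, INR n * conv rr rr n = 2 * conv DD rr n).
  { intros n. rewrite conv_leib. fold DD. rewrite (conv_comm rr DD). ring. }
  rewrite E. rewrite Rmult_minus_distr_r.
  replace (2 * conv rr rr m) with (2 * conv (sh2 rr) rr (S (S m))) by (rewrite conv_sh2; ring).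
  replace (INR m * conv rr rr m) with (2 * conv (sh2 DD) rr (S (S m))) by (rewrite conv_sh2, E; ring).
  assert (C : conv DD rr (S (S m)) + conv (sh2 DD) rr (S (S m)) = conv (sh2 rr) rr (S (S m))).
  { rewrite <- (conv_plus DD (sh2 DD)). unfold conv. apply sum_eq. intros; rewrite DD_rel; reflexivity. }
  lra.
Qed.

Lemma QQ_val n : QQ n = if Nat.eqb n 0 then 1 else if Nat.eqb n 2 then 1 else 0.
Proof.
  cut (forall n, (QQ n = if Nat.eqb n 0 then 1 else if Nat.eqb n 2 then 1 else 0) /\
       (QQ (S n) = if Nat.eqb (S n) 0 then 1 else if Nat.eqb (S n) 2 then 1 else 0)).
  { intros H; apply H. }
  clear n. induction n.
  - split; unfold QQ, conv; simpl; ring.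
  - destruct IHn as [H1 H2]. split; [exact H2|].
    assert (H := QQ_rec n).
    assert (Hn : INR (S (S n)) <> 0) by (apply not_0_INR; lia).
    apply (Rmult_eq_reg_l (INR (S (S n)))); [|exact Hn]. rewrite H, H1.
    destruct n as [|[|[|n]]]; simpl; try ring.
Qed.

Lemma bb_rr n : bb n = rr n + d1 n.
Proof.
  cut (bb n = rr n + d1 n /\ bb (S n) = rr (S n) + d1 (S n)); [tauto|].
  induction n.
  - rewrite bb0, bb1. unfold d1. simpl. split; ring.
  - destruct IHn as [H1 H2]. split; [exact H2|].
    assert (Hn : INR (S (S n)) <> 0) by (apply not_0_INR; lia).
    apply (Rmult_eq_reg_l (INR (S (S n)))); [|exact Hn].
    rewrite bb_rec, Rmult_plus_distr_l, rr_rec, H1.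
    unfold d1. destruct n as [|[|n]]; simpl; ring.
Qed.

Lemma rr_even n : (-1)^n * rr n = rr n.
Proof.
  cut ((-1)^n * rr n = rr n /\ (-1)^(S n) * rr (S n) = rr (S n)); [tauto|].
  induction n.
  - simpl; split; ring.
  - destruct IHn as [H1 H2]. split; [exact H2|].
    simpl rr. simpl pow. simpl pow in H1. rewrite <- H1 at 2. ring.
Qed.

Lemma d1_odd n : (-1)^n * d1 n = - d1 n.
Proof. unfold d1. destruct (Nat.eqb_spec n 1). subst; simpl; ring. ring. Qed.

Lemma PP_val n : sum_f_R0 (fun k => bb k * ((-1)^(n - k) * bb (n - k)%nat)) n
   = if Nat.eqb n 0 then 1 else 0.
Proof.
  transitivity (QQ n + (conv d1 rr n - conv rr d1 n) - conv d1 d1 n).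
  { unfold QQ, conv. rewrite <- minus_sum, <- plus_sum, <- minus_sum.
    apply sum_eq. intros i Hi. rewrite !bb_rr. rewrite Rmult_plus_distr_l, rr_even, d1_odd. ring. }
  rewrite (conv_comm rr d1). rewrite QQ_val.
  replace (conv d1 rr n - conv d1 rr n) with 0 by ring.
  destruct n as [|m]. rewrite conv_d1_0. simpl. ring.
  rewrite conv_d1. unfold d1. destruct m as [|[|m]]; simpl Nat.eqb; cbv iota; ring.
Qed.

Lemma sum_n_RtoC (f : nat -> R) n : sum_n (fun k => RtoC (f k)) n = RtoC (sum_f_R0 f n).
Proof.
  induction n. rewrite sum_O. reflexivity.
  rewrite sum_Sn, IHn. simpl. Ceq.
Qed.

Open Scope C_scope.
Lemma part1 : forall n : nat,
      sum_n (fun k => master_coef 1 2 1 k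
                      * (powC (-1) (n - k) * master_coef 1 2 1 (n - k))) n
      = (if Nat.eqb n 0 then RtoC 1 else RtoC 0).
Proof.
  intros n.
  rewrite (sum_n_ext _ (fun k => RtoC (bb k * ((-1)^(n - k) * bb (n - k)%nat))%R)).
  2:{ intros k. rewrite !mc_R. fold (bb k). fold (bb (n-k)%nat).
      assert (E : powC (-1) (n - k) = RtoC ((-1)^(n-k))).
      { clear. induction (n-k)%nat; simpl; [reflexivity|]. rewrite IHn0. Ceq. }
      rewrite E. Ceq. }
  rewrite sum_n_RtoC, PP_val. destruct (Nat.eqb n 0); reflexivity.
Qed.


Open Scope R_scope.

Definition CD (f : R -> C) (t : R) (l : C) : Prop :=
  is_derive (fun s => fst (f s)) t (fst l) /\ is_derive (fun s => snd (f s)) t (snd l).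

Lemma is_derive_eq (f : R -> R) t l1 l2 : is_derive f t l1 -> l1 = l2 -> is_derive f t l2.
Proof. intros H E; subst; exact H. Qed.

Ltac rwD := repeat match goal with
  | H : is_derive ?f ?t ?v |- context [Derive (fun x => ?f x) ?t] =>
      replace (Derive (fun x => f x) t) with v by (symmetry; apply is_derive_unique; exact H)
  end.
Ltac exD := repeat match goal with
  | |- _ /\ _ => split
  | |- True => exact I
  | H : is_derive ?f ?t _ |- ex_derive (fun x => ?f x) ?t => exists (fst (fst (pair (pair _ tt) tt))) ; exact H
  end.

Lemma RD_mul1 (fr fi gr gi : R -> R) t a b c d :
  is_derive fr t a -> is_derive fi t b -> is_derive gr t c -> is_derive gi t d ->
  is_derive (fun s => fr s * gr s - fi s * gi s) t (a * gr t + fr t * c - (b * gi t + fi t * d)).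
Proof.
  intros H1 H2 H3 H4. auto_derive.
  - repeat split; eexists; eassumption.
  - rwD. ring.
Qed.

Lemma RD_mul2 (fr fi gr gi : R -> R) t a b c d :
  is_derive fr t a -> is_derive fi t b -> is_derive gr t c -> is_derive gi t d ->
  is_derive (fun s => fr s * gi s + fi s * gr s) t (a * gi t + fr t * d + (b * gr t + fi t * c)).
Proof.
  intros H1 H2 H3 H4. auto_derive.
  - repeat split; eexists; eassumption.
  - rwD. ring.
Qed.

Lemma RD_add (fr gr : R -> R) t a c :
  is_derive fr t a -> is_derive gr t c -> is_derive (fun s => fr s + gr s) t (a + c).
Proof.
  intros H1 H3. auto_derive.
  - repeat split; eexists; eassumption.
  - rwD. ring.
Qed.

Lemma RD_exp1 (fr fi : R -> R) t a b :
  is_derive fr t a -> is_derive fi t b ->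
  is_derive (fun s => exp (fr s) * cos (fi s)) t (a * (exp (fr t) * cos (fi t)) - b * (exp (fr t) * sin (fi t))).
Proof.
  intros H1 H2. auto_derive.
  - repeat split; eexists; eassumption.
  - rwD. ring.
Qed.

Lemma RD_exp2 (fr fi : R -> R) t a b :
  is_derive fr t a -> is_derive fi t b ->
  is_derive (fun s => exp (fr s) * sin (fi s)) t (a * (exp (fr t) * sin (fi t)) + b * (exp (fr t) * cos (fi t))).
Proof.
  intros H1 H2. auto_derive.
  - repeat split; eexists; eassumption.
  - rwD. ring.
Qed.

Open Scope C_scope.

Definition cexp (z : C) : C := (exp (fst z) * cos (snd z), exp (fst z) * sin (snd z))%R.

Lemma cexp_add a b : cexp (a + b) = cexp a * cexp b.
Proof.
  unfold cexp. simpl. rewrite exp_plus, cos_plus, sin_plus. Ceq.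
Qed.

Lemma cexp_0 : cexp 0 = 1.
Proof. unfold cexp. simpl. rewrite exp_0, cos_0, sin_0. Ceq. Qed.

Lemma CD_ext f g t l : (forall s, f s = g s) -> CD f t l -> CD g t l.
Proof.
  intros E [H1 H2]. split; eapply is_derive_ext; try eassumption; intros s; simpl; rewrite E; reflexivity.
Qed.

Lemma CD_eq f t l1 l2 : CD f t l1 -> l1 = l2 -> CD f t l2.
Proof. intros H E; subst; exact H. Qed.

Lemma CD_const (c : C) t : CD (fun _ => c) t 0.
Proof. split; simpl; apply (is_derive_const (K := R_AbsRing) (V := R_NormedModule)). Qed.

Lemma CD_id t : CD (fun s => RtoC s) t 1.
Proof. split; simpl. apply (is_derive_id (K := R_AbsRing)).
  apply (is_derive_const (K := R_AbsRing) (V := R_NormedModule)). Qed.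

Lemma CD_plus f g t lf lg : CD f t lf -> CD g t lg -> CD (fun s => f s + g s) t (lf + lg).
Proof.
  intros [H1 H2] [H3 H4]. split; simpl.
  - exact (RD_add (fun s => fst (f s)) (fun s => fst (g s)) t _ _ H1 H3).
  - exact (RD_add (fun s => snd (f s)) (fun s => snd (g s)) t _ _ H2 H4).
Qed.

Lemma CD_mult f g t lf lg : CD f t lf -> CD g t lg -> CD (fun s => f s * g s) t (lf * g t + f t * lg).
Proof.
  intros [H1 H2] [H3 H4]. split; simpl.
  - eapply is_derive_eq.
    exact (RD_mul1 (fun s => fst (f s)) (fun s => snd (f s)) (fun s => fst (g s)) (fun s => snd (g s)) t _ _ _ _ H1 H2 H3 H4).
    simpl; ring.
  - eapply is_derive_eq.
    exact (RD_mul2 (fun s => fst (f s)) (fun s => snd (f s)) (fun s => fst (g s)) (fun s => snd (g s)) t _ _ _ _ H1 H2 H3 H4).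
    simpl; ring.
Qed.

Lemma CD_cexp f t l : CD f t l -> CD (fun s => cexp (f s)) t (l * cexp (f t)).
Proof.
  intros [H1 H2]. split; simpl.
  - eapply is_derive_eq.
    exact (RD_exp1 (fun s => fst (f s)) (fun s => snd (f s)) t _ _ H1 H2).
    simpl; ring.
  - eapply is_derive_eq.
    exact (RD_exp2 (fun s => fst (f s)) (fun s => snd (f s)) t _ _ H1 H2).
    simpl; ring.
Qed.

Lemma CD_const_int f : (forall s, (0 <= s <= 1)%R -> CD f s 0) ->
  forall s, (0 <= s <= 1)%R -> f s = f 0%R.
Proof.
  intros H s Hs. destruct (Req_dec s 0) as [->|Hs0]; [reflexivity|].
  apply injective_projections; symmetry.
  - apply (eq_is_derive (fun s => fst (f s))); [|lra].
    intros u Hu. apply (H u ltac:(lra)).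
  - apply (eq_is_derive (fun s => snd (f s))); [|lra].
    intros u Hu. apply (H u ltac:(lra)).
Qed.


Open Scope R_scope.

Lemma sum_n_C (u : nat -> C) n :
  sum_n (G := C_AbelianMonoid) u n = (sum_n (fun k => fst (u k)) n, sum_n (fun k => snd (u k)) n).
Proof.
  induction n. rewrite !sum_O. destruct (u 0%nat); reflexivity.
  rewrite !sum_Sn, IHn. reflexivity.
Qed.

Lemma is_series_C (u : nat -> C) l1 l2 :
  is_series (fun n => fst (u n)) l1 -> is_series (fun n => snd (u n)) l2 ->
  is_series (K := C_AbsRing) (V := C_NormedModule) u (l1, l2).
Proof.
  intros H1 H2. unfold is_series in *.
  apply filterlim_locally. intros eps.
  pose proof (proj1 (filterlim_locally _ _) H1 eps) as H1'.
  pose proof (proj1 (filterlim_locally _ _) H2 eps) as H2'.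
  generalize (filter_and _ _ H1' H2'). apply filter_imp.
  intros n [B1 B2]. 
  change (sum_n (G := C_AbelianMonoid) u n) with (sum_n (G := C_AbelianMonoid) u n).
  rewrite sum_n_C. split; assumption.
Qed.

Lemma is_series_C_inv (u : nat -> C) l :
  is_series (K := C_AbsRing) (V := C_NormedModule) u l ->
  is_series (fun n => fst (u n)) (fst l) /\ is_series (fun n => snd (u n)) (snd l).
Proof.
  intros H. unfold is_series in *. split;
  apply filterlim_locally; intros eps;
  pose proof (proj1 (filterlim_locally _ _) H eps) as H';
  revert H'; apply filter_imp; intros n B;
  rewrite sum_n_C in B; destruct l; apply B.
Qed.

Lemma is_series_C_unique (u : nat -> C) l1 l2 :
  is_series (K := C_AbsRing) (V := C_NormedModule) u l1 ->
  is_series (K := C_AbsRing) (V := C_NormedModule) u l2 -> l1 = l2.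
Proof.
  intros H1 H2. apply is_series_C_inv in H1, H2.
  destruct H1 as [A1 B1], H2 as [A2 B2].
  apply is_series_unique in A1, A2, B1, B2.
  apply injective_projections; congruence.
Qed.


Open Scope R_scope.

Definition CPS (u : nat -> C) (t : R) : C :=
  (PSeries (fun n => fst (u n)) t, PSeries (fun n => snd (u n)) t).

Lemma pow_n_RtoC t k : pow_n (K := C_AbsRing) (RtoC t) k = RtoC (t ^ k).
Proof. induction k; simpl; [reflexivity|]. rewrite IHk. Ceq. Qed.

Lemma CPS_correct u t :
  ex_pseries (fun n => fst (u n)) t -> ex_pseries (fun n => snd (u n)) t ->
  is_pseries (K := C_AbsRing) (V := C_NormedModule) u (RtoC t) (CPS u t).
Proof.
  intros H1 H2. apply PSeries_correct in H1, H2. unfold is_pseries in *.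
  apply is_series_C.
  - eapply is_series_ext; [|exact H1]. intros n. simpl. rewrite pow_n_RtoC. rewrite pow_n_pow.
    change (scal (t ^ n) (fst (u n))) with (t ^ n * fst (u n)). simpl. ring.
  - eapply is_series_ext; [|exact H2]. intros n. simpl. rewrite pow_n_RtoC. rewrite pow_n_pow.
    change (scal (t ^ n) (snd (u n))) with (t ^ n * snd (u n)). simpl. ring.
Qed.


Open Scope R_scope.

Lemma cc_bound n : Rabs (cc n) <= 1.
Proof.
  cut (Rabs (cc n) <= 1 /\ Rabs (cc (S n)) <= 1); [tauto|].
  induction n.
  - rewrite cc0, cc1, Rabs_R0, Rabs_R1. lra.
  - destruct IHn as [H1 H2]. split; [exact H2|].
    assert (Hr := cc_rec n).
    assert (Hp : 0 < INR (S (S n)) * INR (S n)).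
    { apply Rmult_lt_0_compat; apply lt_0_INR; lia. }
    assert (E : cc (S (S n)) = - (INR n)^2 / (INR (S (S n)) * INR (S n)) * cc n).
    { apply Rmult_eq_reg_l with (INR (S (S n)) * INR (S n)); [|lra]. rewrite Hr. field. split; apply not_0_INR; lia. }
    rewrite E, Rabs_mult. 
    assert (B : Rabs (- (INR n)^2 / (INR (S (S n)) * INR (S n))) <= 1).
    { rewrite Rabs_div by lra. rewrite Rabs_Ropp, (Rabs_right (INR (S (S n)) * INR (S n))) by lra.
      rewrite Rabs_right by (apply Rle_ge, pow2_ge_0).
      apply Rmult_le_reg_r with (INR (S (S n)) * INR (S n)); [lra|].
      unfold Rdiv. rewrite Rmult_assoc, Rinv_l by lra.
      rewrite !S_INR. assert (0 <= INR n) by apply pos_INR. nra. }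
    assert (0 <= Rabs (cc n)) by apply Rabs_pos.
    assert (0 <= Rabs (- INR n ^ 2 / (INR (S (S n)) * INR (S n)))) by apply Rabs_pos.
    nra.
Qed.

Lemma Cmod_powC x n : Cmod (powC x n) = Cmod x ^ n.
Proof.
  induction n; simpl. unfold Cmod; simpl. replace (1 * (1 * 1) + 0 * (0 * 1))%R with 1 by ring. apply sqrt_1.
  rewrite Cmod_mult, IHn. ring.
Qed.

Lemma pow_le_one a n : 0 <= a <= 1 -> a ^ n <= 1.
Proof.
  intros H; induction n; simpl; [lra|].
  assert (0 <= a ^ n) by (apply pow_le; lra). nra.
Qed.

Lemma rad_gen (v : nat -> R) rho : 0 <= rho < 1 -> (forall n, Rabs (v n) <= rho ^ n) ->
  forall t, Rabs t <= 1 -> Rbar_lt (Rabs t) (CV_radius v).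
Proof.
  intros Hr Hv t Ht.
  set (r0 := 2 / (1 + rho)).
  assert (Hr0 : 1 < r0) by (unfold r0; apply Rmult_lt_reg_r with (1 + rho); [lra|];
     unfold Rdiv; rewrite Rmult_assoc, Rinv_l by lra; lra).
  assert (Hr1 : rho * r0 <= 1) by (unfold r0; apply Rmult_le_reg_r with (1 + rho); [lra|];
     unfold Rdiv; rewrite (Rmult_assoc rho), Rmult_assoc, Rinv_l by lra; lra).
  apply Rbar_lt_le_trans with (Finite r0). simpl; lra.
  apply (proj1 (CV_radius_bounded v)). exists 1. intros n.
  rewrite Rabs_mult, <- RPow_abs, (Rabs_right r0) by lra.
  apply Rle_trans with (rho ^ n * r0 ^ n).
  apply Rmult_le_compat_r. apply pow_le; lra. apply Hv.
  rewrite <- Rpow_mult_distr. apply pow_le_one. split; [|exact Hr1].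
  apply Rmult_le_pos; lra.
Qed.

Open Scope C_scope.

Definition ca (x : C) (n : nat) : C := RtoC (cc n) * powC x n.
Definition ca1 (x : C) (n : nat) : C := RtoC (INR (S n)) * ca x (S n).
Definition ca2 (x : C) (n : nat) : C := RtoC (INR (S n)) * ca1 x (S n).

Definition radok (u : nat -> C) := forall t, (Rabs t <= 1)%R ->
  Rbar_lt (Rabs t) (CV_radius (fun n => fst (u n))) /\ Rbar_lt (Rabs t) (CV_radius (fun n => snd (u n))).

Lemma radok_ca x : (Cmod x < 1)%R -> radok (ca x).
Proof.
  intros Hx t Ht. assert (H0 := Cmod_ge_0 x).
  assert (B : forall n, (Rabs (fst (ca x n)) <= Cmod x ^ n /\ Rabs (snd (ca x n)) <= Cmod x ^ n)%R).
  { intros n. rewrite <- Cmod_powC. unfold ca. simpl.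
    replace (cc n * fst (powC x n) - 0 * snd (powC x n))%R with (cc n * fst (powC x n))%R by ring.
    replace (cc n * snd (powC x n) + 0 * fst (powC x n))%R with (cc n * snd (powC x n))%R by ring.
    rewrite !Rabs_mult. assert (Hc := cc_bound n). assert (0 <= Rabs (cc n))%R by apply Rabs_pos.
    assert (R1 := re_le_Cmod (powC x n)). unfold Re in R1.
    assert (R2 : (Rabs (snd (powC x n)) <= Cmod (powC x n))%R).
    { unfold Cmod. rewrite <- sqrt_Rsqr_abs. apply sqrt_le_1_alt. unfold Rsqr.
      assert (0 <= fst (powC x n) ^ 2)%R by apply pow2_ge_0. nra. }
    assert (0 <= Rabs (fst (powC x n)))%R by apply Rabs_pos.
    assert (0 <= Rabs (snd (powC x n)))%R by apply Rabs_pos.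
    split; nra. }
  split; apply (rad_gen _ (Cmod x)); try lra; try exact Ht; intros n; apply B.
Qed.

Lemma radok_der u v : (forall n, v n = RtoC (INR (S n)) * u (S n)) -> radok u -> radok v.
Proof.
  intros E H t Ht. destruct (H t Ht) as [H1 H2].
  rewrite (CV_radius_ext (fun n => fst (v n)) (PS_derive (fun n => fst (u n)))).
  rewrite (CV_radius_ext (fun n => snd (v n)) (PS_derive (fun n => snd (u n)))).
  rewrite !CV_radius_derive. split; assumption.
  intros n; rewrite E; unfold PS_derive; simpl; ring.
  intros n; rewrite E; unfold PS_derive; simpl; ring.
Qed.

Lemma CD_CPS u v : (forall n, v n = RtoC (INR (S n)) * u (S n)) -> radok u ->
  forall t, (Rabs t <= 1)%R -> CD (CPS u) t (CPS v t).
Proof.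
  intros E H t Ht. destruct (H t Ht) as [H1 H2]. split; simpl.
  - eapply is_derive_eq. apply (is_derive_PSeries _ _ H1).
    apply PSeries_ext. intros n; rewrite E; unfold PS_derive; simpl; ring.
  - eapply is_derive_eq. apply (is_derive_PSeries _ _ H2).
    apply PSeries_ext. intros n; rewrite E; unfold PS_derive; simpl; ring.
Qed.

Lemma CPS_ok u t : radok u -> (Rabs t <= 1)%R ->
  is_pseries (K := C_AbsRing) (V := C_NormedModule) u (RtoC t) (CPS u t).
Proof.
  intros H Ht. destruct (H t Ht) as [H1 H2].
  apply CPS_correct; apply CV_radius_inside; assumption.
Qed.


Open Scope C_scope.

Lemma cc3 : cc 3 = (-1/6)%R.
Proof. unfold cc, mcR. simpl. field. Qed.

Lemma ode_coef x n :
  PS_plus (ca2 x) (PS_plus (PS_scal (x*x) (PS_incr_n (ca2 x) 2)) (PS_scal (x*x) (PS_incr_1 (ca1 x)))) n = zero.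
Proof.
  unfold PS_plus, PS_scal, PS_incr_1.
  destruct n as [|[|m]]; simpl PS_incr_n.
  - unfold ca2, ca1, ca. rewrite cc2. apply injective_projections; simpl; ring.
  - unfold ca2, ca1, ca. rewrite cc3, cc1. apply injective_projections; simpl; field.
  - assert (Hc : cc (S (S (S (S m)))) = (- (INR (S (S m)))^2 / (INR (S (S (S (S m)))) * INR (S (S (S m)))) * cc (S (S m)))%R).
    { assert (Hr := cc_rec (S (S m))).
      apply Rmult_eq_reg_l with (INR (S (S (S (S m)))) * INR (S (S (S m))))%R.
      rewrite Hr. field. split; apply not_0_INR; lia.
      apply Rmult_integral_contrapositive; split; apply not_0_INR; lia. }
    unfold ca2, ca1, ca. rewrite Hc.
    change (powC x (S (S (S (S m))))) with (x * (x * powC x (S (S m)))).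
    assert (H3 : INR (S (S (S m))) <> 0%R) by (apply not_0_INR; lia).
    assert (H4 : INR (S (S (S (S m)))) <> 0%R) by (apply not_0_INR; lia).
    rewrite (S_INR (S m)).
    generalize (powC x (S (S m))). intros P.
    set (i1 := INR (S m)) in *. set (i3 := INR (S (S (S m)))) in *. set (i4 := INR (S (S (S (S m))))) in *.
    clearbody i1 i3 i4. set (c2 := cc (S (S m))). clearbody c2.
    destruct x as [x1 x2], P as [p1 p2].
    apply injective_projections; simpl; field; split; assumption.
Qed.


Open Scope C_scope.

Lemma is_series_zeroR : is_series (fun _ : nat => 0%R) 0%R.
Proof.
  unfold is_series. eapply filterlim_ext; [|apply filterlim_const].
  intros n. simpl. induction n. rewrite sum_O; reflexivity.
  rewrite sum_Sn, <- IHn. compute; ring.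
Qed.

Lemma is_pseries_zeroC T :
  is_pseries (K := C_AbsRing) (V := C_NormedModule) (fun _ => zero) T zero.
Proof.
  unfold is_pseries. change (@zero (NormedModule.AbelianGroup C_AbsRing C_NormedModule)) with (0%R, 0%R).
  apply is_series_C; eapply is_series_ext; try apply is_series_zeroR; intros n; simpl; ring.
Qed.

Lemma radok_all x : (Cmod x < 1)%R -> radok (ca x) /\ radok (ca1 x) /\ radok (ca2 x).
Proof.
  intros Hx. assert (R0 := radok_ca x Hx).
  assert (R1 := radok_der (ca x) (ca1 x) (fun n => eq_refl) R0).
  assert (R2 := radok_der (ca1 x) (ca2 x) (fun n => eq_refl) R1).
  tauto.
Qed.

Lemma ode x t : (Cmod x < 1)%R -> (Rabs t <= 1)%R ->
  CPS (ca2 x) t * (1 + RtoC t * RtoC t * x * x) + RtoC t * x * x * CPS (ca1 x) t = 0.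
Proof.
  intros Hx Ht. destruct (radok_all x Hx) as [R0 [R1 R2]].
  assert (H1 := CPS_ok _ _ R1 Ht). assert (H2 := CPS_ok _ _ R2 Ht).
  set (T := RtoC t) in *.
  assert (Hi2 := is_pseries_incr_n (ca2 x) 2 T _ H2).
  assert (Hs2 := is_pseries_scal (x*x) _ T _ (Cmult_comm _ _) Hi2).
  assert (Hi1 := is_pseries_incr_1 (ca1 x) T _ H1).
  assert (Hs1 := is_pseries_scal (x*x) _ T _ (Cmult_comm _ _) Hi1).
  assert (Hp := is_pseries_plus _ _ _ _ _ H2 (is_pseries_plus _ _ _ _ _ Hs2 Hs1)).
  assert (Hz := is_pseries_ext _ (fun _ => zero) _ _ (ode_coef x) Hp).
  assert (E := is_series_C_unique _ _ _ Hz (is_pseries_zeroC T)).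
  change (CPS (ca2 x) t + (x * x * (T * (T * 1) * CPS (ca2 x) t) + x * x * (T * CPS (ca1 x) t)) = 0) in E.
  rewrite <- E. ring.
Qed.


Open Scope R_scope.

Lemma Csqrt_sq r : 0 < fst r -> Csqrt (r * r)%C = r.
Proof.
  destruct r as [p q]. simpl. intros Hp. unfold Csqrt. simpl.
  assert (Cm : Cmod (p * p - q * q, p * q + q * p) = p * p + q * q).
  { unfold Cmod. simpl.
    replace ((p * p - q * q) * ((p * p - q * q) * 1) + (p * q + q * p) * ((p * q + q * p) * 1))
      with ((p * p + q * q) * (p * p + q * q)) by ring.
    apply sqrt_square. nra. }
  change ((p, q) * (p, q))%C with (p * p - q * q, p * q + q * p). rewrite Cm. f_equal.
  - replace ((p * p + q * q + (p * p - q * q)) / 2) with (p * p) by field. apply sqrt_square; lra.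
  - replace ((p * p + q * q - (p * p - q * q)) / 2) with (q * q) by field.
    destruct (Rlt_dec (p * q + q * p) 0).
    + assert (q < 0) by nra. replace (q * q) with ((-q) * (-q)) by ring. rewrite sqrt_square; lra.
    + assert (0 <= q) by nra. apply sqrt_square; lra.
Qed.

Lemma Clog_cexp z : - (PI / 2) < snd z < PI / 2 -> Clog (cexp z) = z.
Proof.
  destruct z as [a b]. simpl. intros Hb. unfold Clog, cexp, Arg. simpl.
  assert (Hc : 0 < cos b) by (apply cos_gt_0; lra).
  assert (He : 0 < exp a) by apply exp_pos.
  f_equal.
  - unfold Cmod. simpl.
    replace (exp a * cos b * (exp a * cos b * 1) + exp a * sin b * (exp a * sin b * 1))
      with (exp a * exp a * (sin b * sin b + cos b * cos b)) by ring.
    assert (S1 : sin b * sin b + cos b * cos b = 1) by (rewrite <- (sin2_cos2 b); unfold Rsqr; ring).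
    rewrite S1, Rmult_1_r, sqrt_square by lra. apply ln_exp.
  - destruct (Rlt_dec 0 (exp a * cos b)) as [_|N]; [|exfalso; apply N; nra].
    replace (exp a * sin b / (exp a * cos b)) with (tan b) by (unfold tan; field; lra).
    apply atan_tan. lra.
Qed.


Open Scope C_scope.

Ltac CDtac := repeat first [ simple apply CD_const | simple apply CD_id | eassumption | simple apply CD_plus | simple apply CD_mult | simple apply CD_cexp ].

Section Main.
Variable x : C.
Hypothesis Hx : (Cmod x < 1)%R.
Hypothesis Hx0 : x <> 0.

Let F := CPS (ca x).
Let F1 := CPS (ca1 x).
Let F2 := CPS (ca2 x).
Let fp (s : R) : C := 1 + RtoC s * RtoC s * x * x.

Lemma HD1 s : (0 <= s <= 1)%R -> CD F s (F1 s).
Proof. intros Hs. apply CD_CPS; [reflexivity| apply (radok_all x Hx) | apply Rabs_le; lra]. Qed.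
Lemma HD2 s : (0 <= s <= 1)%R -> CD F1 s (F2 s).
Proof. intros Hs. apply CD_CPS; [reflexivity| apply (radok_all x Hx) | apply Rabs_le; lra]. Qed.
Lemma Hode s : (0 <= s <= 1)%R -> F2 s * fp s + RtoC s * x * x * F1 s = 0.
Proof. intros Hs. apply ode; [exact Hx| apply Rabs_le; lra]. Qed.

Lemma F1_0 : F1 0%R = x.
Proof. unfold F1, CPS. rewrite !PSeries_0. unfold ca1, ca. rewrite cc1. Ceq. Qed.
Lemma F_0 : F 0%R = 0.
Proof. unfold F, CPS. rewrite !PSeries_0. unfold ca. rewrite cc0. Ceq. Qed.

Lemma HA s : (0 <= s <= 1)%R -> fp s * F1 s * F1 s = x * x.
Proof.
  intros Hs.
  rewrite (CD_const_int (fun s => fp s * F1 s * F1 s)).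
  - unfold fp. rewrite F1_0. Ceq.
  - intros u Hu. assert (H1 := HD2 u Hu). eapply CD_eq. unfold fp. CDtac.
    transitivity (2 * F1 u * (F2 u * fp u + RtoC u * x * x * F1 u)).
    unfold fp; ring. rewrite Hode by exact Hu. ring.
  - exact Hs.
Qed.

Let W (s : R) : C := RtoC s * x + F1 s * fp s * / x.

Lemma HK s : (0 <= s <= 1)%R -> cexp (RtoC (-1) * F s) * W s = 1.
Proof.
  intros Hs.
  rewrite (CD_const_int (fun s => cexp (RtoC (-1) * F s) * W s)).
  - unfold W, fp. rewrite F_0, F1_0. replace (RtoC (-1) * 0) with (RtoC 0) by Ceq.
    rewrite cexp_0. field. exact Hx0.
  - intros u Hu. assert (H1 := HD1 u Hu). assert (H2 := HD2 u Hu).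
    eapply CD_eq. unfold W, fp. CDtac.
    transitivity (cexp (RtoC (-1) * F u) * ((- (fp u * F1 u * F1 u - x * x) + (F2 u * fp u + RtoC u * x * x * F1 u)) / x)).
    unfold fp; field; exact Hx0.
    rewrite HA, Hode by exact Hu. field. exact Hx0.
  - exact Hs.
Qed.

Let Q (s : R) : C := F1 s * fp s * / x.

Lemma HQ2 s : (0 <= s <= 1)%R -> Q s * Q s = fp s.
Proof.
  intros Hs. unfold Q.
  transitivity (fp s * (fp s * F1 s * F1 s) / (x * x)). field; exact Hx0.
  rewrite HA by exact Hs. field. exact Hx0.
Qed.

Lemma Hexp s : (0 <= s <= 1)%R -> cexp (F s) = RtoC s * x + Q s.
Proof.
  intros Hs. transitivity (cexp (F s) * (cexp (RtoC (-1) * F s) * W s)).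
  rewrite HK by exact Hs. ring.
  rewrite Cmult_assoc, <- cexp_add.
  replace (F s + RtoC (-1) * F s) with (RtoC 0) by Ceq. rewrite cexp_0. unfold W, Q. ring.
Qed.

Lemma Hexpm s : (0 <= s <= 1)%R -> cexp (RtoC (-1) * F s) = Q s - RtoC s * x.
Proof.
  intros Hs. transitivity (cexp (RtoC (-1) * F s) * W s * (Q s - RtoC s * x)).
  2:{ rewrite HK by exact Hs. ring. }
  transitivity (cexp (RtoC (-1) * F s) * (Q s * Q s - RtoC s * RtoC s * x * x)).
  rewrite HQ2 by exact Hs. unfold fp. ring.
  unfold W, Q. ring.
Qed.

Lemma Hre s : (0 <= s <= 1)%R ->
  (fst (Q s) * 2 = (exp (fst (F s)) + exp (- fst (F s))) * cos (snd (F s)))%R.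
Proof.
  intros Hs. assert (E1 := Hexp s Hs). assert (E2 := Hexpm s Hs).
  assert (E3 : cexp (F s) + cexp (RtoC (-1) * F s) = 2 * Q s) by (rewrite E1, E2; ring).
  revert E3. generalize (Q s) (F s). intros [q1 q2] [a b] E3.
  apply (f_equal fst) in E3. unfold cexp in E3. simpl in E3 |- *.
  replace (-1 * a - 0 * b)%R with (- a)%R in E3 by ring.
  replace (-1 * b + 0 * a)%R with (- b)%R in E3 by ring.
  rewrite cos_neg in E3. lra.
Qed.

Lemma Hcont s : (0 <= s <= 1)%R -> continuity_pt (fun u => snd (F u)) s.
Proof.
  intros Hs. apply continuity_pt_filterlim. apply (ex_derive_continuous (K := R_AbsRing) (V := R_NormedModule)).
  destruct (HD1 s Hs) as [_ H]. eexists. exact H.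
Qed.

Lemma Hnocos s : (0 <= s <= 1)%R -> cos (snd (F s)) <> 0%R.
Proof.
  intros Hs Hc. assert (H := Hre s Hs). rewrite Hc, Rmult_0_r in H.
  assert (Q0 : fst (Q s) = 0%R) by lra.
  assert (H2 := HQ2 s Hs). unfold fp in H2. revert H2 Q0. generalize (Q s). intros [q1 q2] H2 Q0.
  apply (f_equal fst) in H2. simpl in H2, Q0. rewrite Q0 in H2.
  assert (Hm : (fst x * fst x + snd x * snd x < 1)%R).
  { assert (C2 := Cmod2_alt x). unfold Re, Im in C2. assert (0 <= Cmod x)%R by apply Cmod_ge_0. nra. }
  assert (0 <= s * s <= 1)%R by nra.
  assert (0 <= q2 * q2)%R by nra.
  assert (0 <= fst x * fst x)%R by nra. assert (0 <= snd x * snd x)%R by nra.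
  nra.
Qed.

Lemma Hbound s : (0 <= s <= 1)%R -> (- (PI / 2) < snd (F s) < PI / 2)%R.
Proof.
  intros Hs. assert (G0 : snd (F 0%R) = 0%R) by (rewrite F_0; reflexivity).
  assert (HP := PI_RGT_0).
  split.
  - destruct (Rlt_dec (- (PI / 2)) (snd (F s))) as [|N]; [assumption|exfalso].
    destruct (Req_dec (snd (F s)) (- (PI / 2))) as [E|N2].
    + apply (Hnocos s Hs). rewrite E, cos_neg. apply cos_PI2.
    + assert (Hs0 : (0 < s)%R) by (destruct (Req_dec s 0); [subst; lra| lra]).
      destruct (Ranalysis5.IVT_interv (fun u => - snd (F u) - PI / 2)%R 0 s) as [z [Hz Ez]].
      * intros a Ha. apply continuity_pt_minus; [apply continuity_pt_opp; apply Hcont; lra| apply continuity_pt_const; intros ? ?; reflexivity].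
      * exact Hs0.
      * rewrite G0. lra.
      * lra.
      * apply (Hnocos z ltac:(lra)). replace (snd (F z)) with (- (PI / 2))%R by lra. rewrite cos_neg. apply cos_PI2.
  - destruct (Rlt_dec (snd (F s)) (PI / 2)) as [|N]; [assumption|exfalso].
    destruct (Req_dec (snd (F s)) (PI / 2)) as [E|N2].
    + apply (Hnocos s Hs). rewrite E. apply cos_PI2.
    + assert (Hs0 : (0 < s)%R) by (destruct (Req_dec s 0); [subst; lra| lra]).
      destruct (Ranalysis5.IVT_interv (fun u => snd (F u) - PI / 2)%R 0 s) as [z [Hz Ez]].
      * intros a Ha. apply continuity_pt_minus; [apply Hcont; lra| apply continuity_pt_const; intros ? ?; reflexivity].
      * exact Hs0.
      * rewrite G0. lra.
      * lra.
      * apply (Hnocos z ltac:(lra)). replace (snd (F z)) with (PI / 2)%R by lra. apply cos_PI2.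
Qed.

Lemma main_nz : is_series (K := C_AbsRing) (V := C_NormedModule) (ca x) (Carsinh x).
Proof.
  assert (H01 : (0 <= 1 <= 1)%R) by lra.
  assert (B := Hbound 1 H01).
  assert (Hc : (0 < cos (snd (F 1%R)))%R) by (apply cos_gt_0; lra).
  assert (HQp : (0 < fst (Q 1%R))%R).
  { assert (H := Hre 1 H01). assert (0 < exp (fst (F 1%R)))%R by apply exp_pos.
    assert (0 < exp (- fst (F 1%R)))%R by apply exp_pos. nra. }
  assert (Hcar : Carsinh x = F 1%R).
  { unfold Carsinh.
    replace (x * x + 1) with (Q 1%R * Q 1%R) by (rewrite HQ2 by exact H01; unfold fp; ring).
    rewrite Csqrt_sq by exact HQp.
    replace (x + Q 1%R) with (cexp (F 1%R)) by (rewrite Hexp by exact H01; ring).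
    apply Clog_cexp. exact B. }
  rewrite Hcar.
  assert (H := CPS_ok (ca x) 1 (proj1 (radok_all x Hx)) ltac:(rewrite Rabs_R1; lra)).
  unfold is_pseries in H. eapply is_series_ext; [|exact H].
  intros n. cbv beta. rewrite pow_n_RtoC, pow1. change (RtoC 1 * ca x n = ca x n). apply Cmult_1_l.
Qed.
End Main.


Open Scope C_scope.

Lemma part3 : forall x : C, (Cmod x < 1)%R ->
      is_series (fun n => master_coef 0 2 1 n * powC x n) (Carsinh x).
Proof.
  intros x Hx. apply (is_series_ext (ca x)). { intros n. unfold ca. rewrite mc_R. reflexivity. }
  destruct (Ceq_dec x 0) as [->|Hx0]. 2: exact (main_nz x Hx Hx0).
  assert (Hc : Carsinh 0 = 0).
  { unfold Carsinh. replace (0 * 0 + 1) with (RtoC 1 * RtoC 1) by Ceq.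
    rewrite Csqrt_sq by (simpl; lra). replace (0 + RtoC 1) with (cexp 0) by (rewrite cexp_0; Ceq).
    apply Clog_cexp. simpl. assert (HP := PI_RGT_0). lra. }
  rewrite Hc. change (RtoC 0) with ((0%R, 0%R) : C).
  apply is_series_C; eapply is_series_ext; try apply is_series_zeroR; intros n; destruct n; unfold ca; simpl;
   try rewrite cc0; ring.
Qed.

Theorem mainTheorem7 :
  (forall n : nat,
      sum_n (fun k => master_coef 1 2 1 k
                      * (powC (-1) (n - k) * master_coef 1 2 1 (n - k))) n
      = (if Nat.eqb n 0 then RtoC 1 else RtoC 0))
  /\
  (forall n : nat,
      master_coef 0 2 1 n = - (powC (-1) n * master_coef 0 2 1 n))
  /\
  (forall x : C, (Cmod x < 1)%R ->
      is_series (fun n => master_coef 0 2 1 n * powC x n) (Carsinh x)).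
Proof. split; [exact part1| split; [exact part2| exact part3]]. Qed.
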